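(* Let $m$ be a positive integer and suppose that infinitely many of the boards $G_{m,n}$ ($n\ge 1$) have outcome class $V$. Then there exists a nonnegative integer $k<2m$ such that for every nonnegative integer $i$, the board $G_{m,k+2mi}$ has outcome class $V$.
   Context: Domineering is a two-player game played on a rectangular grid of unit squares. The players alternate placing dominoes, each covering two adjacent unoccupied squares; the player Vertical must place dominoes vertically (covering two squares in the same column), and the player Horizontal must place them horizontally (covering two squares in the same row). A player with no legal move on her turn loses. $G_{m,n}$ denotes the empty board with vertical dimension $m$ (number of rows) and horizontal dimension $n$ (number of columns). Every position has one of four outcome classes under optimal play: $V$ (Vertical wins whoever moves first), $H$ (Horizontal wins whoever moves first), $1$ (the player who moves first wins), $2$ (the player who moves second wins). *)

(* Defs.v *)
From mathcomp Require Import all_boot.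
Set Implicit Arguments. Unset Strict Implicit. Unset Printing Implicit Defensive.

(* A cell is (row, column) with row < m, column < n. A position is the set of
   occupied cells. *)
Definition cell (m n : nat) := ('I_m * 'I_n)%type.
Definition position (m n : nat) := {set cell m n}.

Definition Vertical : bool := true.
Definition Horizontal : bool := false.

Definition domino {m n} (p : bool) (x y : cell m n) : bool :=
  if p then (nat_of_ord x.2 == nat_of_ord y.2) && (nat_of_ord y.1 == (nat_of_ord x.1).+1)
  else (nat_of_ord x.1 == nat_of_ord y.1) && (nat_of_ord y.2 == (nat_of_ord x.2).+1).

Definition move {m n} (p : bool) (P Q : position m n) : bool :=
  [exists x : cell m n, exists y : cell m n,
     [&& domino p x y, x \notin P, y \notin P & Q == P :|: [set x; y]]].

Fixpoint wins_fuel {m n} (f : nat) (p : bool) (P : position m n) : bool :=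
  match f with
  | 0 => false
  | f'.+1 => [exists Q : position m n, move p P Q && ~~ wins_fuel f' (~~ p) Q]
  end.

(* Every move occupies two free cells, so a game from P lasts at most
   #|~: P| moves; depth #|~: P|.+1 is therefore sufficient and exact. *)
Definition wins {m n} (p : bool) (P : position m n) : bool :=
  wins_fuel (#|~: P|).+1 p P.

Inductive outcome := OutV | OutH | Out1 | Out2.

Definition outcome_of {m n} (P : position m n) : outcome :=
  match wins Vertical P, wins Horizontal P with
  | true, false => OutV
  | false, true => OutH
  | true, true => Out1     (* first player wins *)
  | false, false => Out2   (* second player wins *)
  end.

Definition G_outcome (m n : nat) : outcome := outcome_of (set0 : position m n).

(* Main.v *)
Require Import Defs.
From mathcomp Require Import all_boot.
From mathcomp Require Import zify.
From Stdlib Require Import Classical.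
Set Implicit Arguments. Unset Strict Implicit.

Lemma cell_eqE (m n : nat) (u v : cell m n) :
  (u == v) = (u.1 == v.1 :> nat) && (u.2 == v.2 :> nat).
Proof. by case: u v => [? ?] [? ?]. Qed.

Section Gen.
Variables m n : nat.
Implicit Types P Q R : position m n.

Lemma move_card p P Q : move p P Q -> #|~: Q| < #|~: P|.
Proof.
case/existsP=> x /existsP [y /and4P [_ hx hy /eqP ->]].
apply: proper_card; rewrite properE; apply/andP; split.
  by apply/subsetP=> z; rewrite !inE negb_or => /andP [].
apply/subsetPn; exists x; first by rewrite inE.
by rewrite !inE eqxx /= orbT.
Qed.

Lemma fuelE f g p P : #|~: P| < f -> #|~: P| < g -> wins_fuel f p P = wins_fuel g p P.
Proof.
elim: f g p P => [|f IH] [|g] p P //= hf hg.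
apply: eq_existsb => Q; case hm: (move p P Q) => //=.
have hc := move_card hm.
by rewrite (IH g) //; apply: leq_trans hc _; rewrite -ltnS.
Qed.

Lemma winsE p P : wins p P = [exists Q, move p P Q && ~~ wins (~~ p) Q].
Proof.
rewrite /wins /=; apply: eq_existsb => Q; case hm: (move p P Q) => //=.
by rewrite (@fuelE _ (#|~: Q|.+1)) // (move_card hm).
Qed.

Lemma lose_cert q (Inv : position m n -> Prop) :
  (forall P Q, Inv P -> move (~~ q) P Q -> exists R, move q Q R /\ Inv R) ->
  forall P, Inv P -> ~~ wins (~~ q) P.
Proof.
move=> H P. move: (ltnSn #|~: P|). move: {2}#|~: P|.+1 => k.
elim: k P => [|k IH] P hk hP; first by [].
rewrite winsE; apply/existsP => [[Q /andP [hm hw]]].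
have [R [hR iR]] := H _ _ hP hm.
move: hw; rewrite negbK winsE => /negP; apply; apply/existsP; exists R; rewrite hR /=.
apply: IH => //. have := move_card hm; have := move_card hR; lia.
Qed.
End Gen.

Section Geo.
Variables m a : nat.
Local Notation N := (a + 2 * m).

Definition emb (z : cell m a) : cell m N := (z.1, widen_ord (leq_addr _ _) z.2).
Definition res (P : position m N) : position m a := [set z | emb z \in P].
Definition twin (u v : cell m N) : bool :=
  [&& a <= u.2, u.2 < a + m, v.1 == u.2 - a :> nat & v.2 == a + m + u.1 :> nat].
Definition Sym (P : position m N) := forall u v, twin u v -> (u \in P) = (v \in P).

Lemma emb_inj : injective emb.
Proof. move=> u v e; apply/eqP; move/eqP: e; rewrite !cell_eqE //=. Qed.

Lemma domino_emb p u v : domino p (emb u) (emb v) = domino p u v.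
Proof. by []. Qed.

Lemma twin_inj u v u' v' : twin u v -> twin u' v' -> (u == u') = (v == v').
Proof. rewrite /twin !cell_eqE; case: u v u' v' => [u1 u2] [v1 v2] [w1 w2] [x1 x2] /=. lia. Qed.

Lemma twin_l u v z : twin u v -> (u == emb z) = false.
Proof. rewrite /twin !cell_eqE; case: u v z => [u1 u2] [v1 v2] [w1 w2] /=.
have := ltn_ord w2. lia. Qed.

Lemma twin_r u v z : twin u v -> (v == emb z) = false.
Proof. rewrite /twin !cell_eqE; case: u v z => [u1 u2] [v1 v2] [w1 w2] /=.
have := ltn_ord w2. have := ltn_ord u1. lia. Qed.

Lemma res_add P x0 y0 : res (P :|: [set emb x0; emb y0]) = res P :|: [set x0; y0].
Proof. by apply/setP=> z; rewrite !inE !(inj_eq emb_inj). Qed.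

Lemma res_out P (x y : cell m N) : a <= x.2 -> a <= y.2 -> res (P :|: [set x; y]) = res P.
Proof.
move=> hx hy; apply/setP=> z; rewrite !inE.
have -> : (emb z == x) = false.
  move: hx; rewrite cell_eqE; case: x z => [x1 x2] [z1 z2] /=. have := ltn_ord z2. lia.
have -> : (emb z == y) = false.
  move: hy; rewrite cell_eqE; case: y z => [x1 x2] [z1 z2] /=. have := ltn_ord z2. lia.
by rewrite !orbF.
Qed.

Lemma res0 : res set0 = set0.
Proof. by apply/setP=> z; rewrite !inE. Qed.

Lemma lift_H Q R' : Sym Q -> move Horizontal (res Q) R' ->
  exists R, [/\ move Horizontal Q R, Sym R & res R = R'].
Proof.
move=> hS /existsP [x1 /existsP [y1 /and4P [hd hx hy /eqP ->]]].
exists (Q :|: [set emb x1; emb y1]); split; last exact: res_add.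
- apply/existsP; exists (emb x1); apply/existsP; exists (emb y1).
  by rewrite domino_emb hd; move: hx hy; rewrite !inE => -> -> /=.
- move=> u v huv; rewrite !inE (hS _ _ huv) !(twin_l _ huv) !(twin_r _ huv).
  done.
Qed.

End Geo.

Section Geo2.
Variables m a : nat.
Local Notation N := (a + 2 * m).
Local Notation twin := (@twin m a).
Local Notation Sym := (@Sym m a).
Local Notation res := (@res m a).
Local Notation emb := (@emb m a).

Lemma twin_cross w z u v : twin w z -> twin u v -> (w == v) = false.
Proof. rewrite /twin !cell_eqE; case: w z u v => [u1 u2] [v1 v2] [w1 w2] [x1 x2] /=. lia. Qed.
Lemma twin_cross' w z u v : twin w z -> twin u v -> (z == u) = false.
Proof. rewrite /twin !cell_eqE; case: w z u v => [u1 u2] [v1 v2] [w1 w2] [x1 x2] /=. lia. Qed.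

Lemma sym_step P u1 v1 u2 v2 : Sym P -> twin u1 v1 -> twin u2 v2 ->
  Sym (P :|: [set u1; u2] :|: [set v1; v2]).
Proof.
move=> hS h1 h2 w z hw; rewrite !inE (hS _ _ hw) (twin_inj hw h1) (twin_inj hw h2).
rewrite (twin_cross hw h1) (twin_cross hw h2) (twin_cross' hw h1) (twin_cross' hw h2).
by rewrite !orbF.
Qed.

Lemma sym_add_emb P x0 y0 : Sym P -> Sym (P :|: [set emb x0; emb y0]).
Proof. by move=> hS u v huv; rewrite !inE (hS _ _ huv) !(twin_l _ huv) !(twin_r _ huv). Qed.

Lemma respond P Q : Sym P -> ~~ wins Vertical (res P) -> move Vertical P Q ->
  exists R, move Horizontal Q R /\ (Sym R /\ ~~ wins Vertical (res R)).
Proof.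
move=> hS hW /existsP [[x1 x2] /existsP [[y1 y2] /and4P [hd hx hy /eqP ->]]].
move: hd; rewrite /domino /= => /andP [/eqP e2 /eqP e1].
have hx1 := ltn_ord x1; have hx2 := ltn_ord x2; have hy1 := ltn_ord y1.
case: (ltnP x2 a) => ha.
- have h1 : x2 < a by [].
  have h2 : y2 < a by rewrite -e2.
  have ex : (x1, x2) = emb (x1, Ordinal h1) by congr pair; apply: val_inj.
  have ey : (y1, y2) = emb (y1, Ordinal h2) by congr pair; apply: val_inj.
  rewrite ex ey in hx hy *.
  set x0 := (x1, Ordinal h1) : cell m a; set y0 := (y1, Ordinal h2) : cell m a.
  have hmv : move Vertical (res P) (res P :|: [set x0; y0]).
    apply/existsP; exists x0; apply/existsP; exists y0.
    rewrite !inE hx hy eqxx /= andbT /domino /= e2 e1 !eqxx //.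
  move: hW; rewrite winsE => /existsPn => /(_ (res P :|: [set x0; y0])); rewrite hmv andTb negbK.
  rewrite winsE => /existsP [R' /andP [hmR hR']].
  rewrite -res_add in hmR.
  have [R [hm hSR hres]] := lift_H (sym_add_emb x0 y0 hS) hmR.
  by exists R; rewrite hres.
case: (ltnP x2 (a + m)) => hb.
- have p1 : x2 - a < m by lia.
  have p2 : a + m + x1 < N by lia.
  have p3 : y2 - a < m by lia.
  have p4 : a + m + y1 < N by lia.
  set x' := (Ordinal p1, Ordinal p2) : cell m N.
  set y' := (Ordinal p3, Ordinal p4) : cell m N.
  have tx : twin (x1, x2) x' by rewrite /twin /=; lia.
  have ty : twin (y1, y2) y' by rewrite /twin /=; lia.
  exists (P :|: [set (x1, x2); (y1, y2)] :|: [set x'; y']); split; last split.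
  + apply/existsP; exists x'; apply/existsP; exists y'.
    rewrite !inE -(hS _ _ tx) -(hS _ _ ty) (negbTE hx) (negbTE hy) /=.
    rewrite ![x' == _]eq_sym ![y' == _]eq_sym (twin_cross tx tx) (twin_cross tx ty).
    rewrite (twin_cross ty tx) (twin_cross ty ty) eqxx /= andbT /domino /=.
    apply/andP; split; apply/eqP; lia.
  + exact: sym_step.
  + by rewrite res_out /= ?res_out //=; lia.
- have p1 : x2 - a - m < m by lia.
  have p2 : a + x1 < N by lia.
  have p3 : y2 - a - m < m by lia.
  have p4 : a + y1 < N by lia.
  set x' := (Ordinal p1, Ordinal p2) : cell m N.
  set y' := (Ordinal p3, Ordinal p4) : cell m N.
  have tx : twin x' (x1, x2) by rewrite /twin /=; lia.
  have ty : twin y' (y1, y2) by rewrite /twin /=; lia.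
  exists (P :|: [set (x1, x2); (y1, y2)] :|: [set x'; y']); split; last split.
  + apply/existsP; exists x'; apply/existsP; exists y'.
    rewrite !inE (hS _ _ tx) (hS _ _ ty) (negbTE hx) (negbTE hy) /=.
    rewrite (twin_cross tx tx) (twin_cross tx ty).
    rewrite (twin_cross ty tx) (twin_cross ty ty) eqxx /= andbT /domino /=.
    apply/andP; split; apply/eqP; lia.
  + by rewrite setUAC; apply: sym_step.
  + by rewrite res_out /= ?res_out //=; lia.
Qed.

End Geo2.

Lemma outV m n : G_outcome m n = OutV <->
  wins Vertical (set0 : position m n) && ~~ wins Horizontal (set0 : position m n).
Proof.
rewrite /G_outcome /outcome_of.
by case: (wins Vertical _); case: (wins Horizontal _); split.
Qed.

Lemma sym0 m a : Sym (set0 : position m (a + 2 * m)).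
Proof. by move=> u v _; rewrite !inE. Qed.

Lemma Inv_lose m a (P : position m (a + 2 * m)) :
  Sym P -> ~~ wins Vertical (res P) -> ~~ wins Vertical P.
Proof.
move=> hS hW.
have := @lose_cert m (a + 2 * m) Horizontal (fun P => Sym P /\ ~~ wins Vertical (res P)).
apply.
- move=> P' Q [hS' hW'] hm; exact: respond hS' hW' hm.
- by split.
Qed.

Lemma descent m a : G_outcome m (a + 2 * m) = OutV -> G_outcome m a = OutV.
Proof.
move/outV=> /andP [hV hH]; apply/outV; apply/andP; split.
- case hA: (wins Vertical (set0 : position m a)) => //.
  have := @Inv_lose m a set0 (@sym0 m a); rewrite res0 hA => /(_ isT).
  by rewrite hV.
- case hB: (wins Horizontal (set0 : position m a)) => //.
  move: hB; rewrite winsE => /existsP [R' /andP [hm hR']].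
  rewrite -(@res0 m a) in hm.
  have [R [hmR hSR hres]] := lift_H (@sym0 m a) hm.
  have hl := Inv_lose hSR; rewrite hres in hl; have := hl hR'.
  move: hH; rewrite winsE => /existsPn /(_ R); rewrite hmR andTb negbK => ->.
  by [].
Qed.

Theorem lemma3p4 (m : nat) (hm : 0 < m)
  (hinf : forall N : nat, exists n : nat, [/\ N <= n, 0 < n & G_outcome m n = OutV]) :
  exists k : nat, k < 2 * m /\ forall i : nat, G_outcome m (k + 2 * m * i) = OutV.
Proof.
set V := fun n => G_outcome m n = OutV.
have down : forall j n, V (n + 2 * m * j) -> V n.
  elim=> [|j IH] n; first by rewrite muln0 addn0.
  have -> : n + 2 * m * j.+1 = (n + 2 * m * j) + 2 * m by rewrite mulnS; lia.
  move=> h; apply: IH; exact: descent.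
have up : forall k i i', i <= i' -> ~ V (k + 2 * m * i) -> ~ V (k + 2 * m * i').
  move=> k i i' hii' hn hv; apply: hn; apply: (down (i' - i)).
  by rewrite -addnA -mulnDr subnKC.
apply: NNPP => hne.
have hk : forall k, k < 2 * m -> exists i, ~ V (k + 2 * m * i).
  move=> k hk; apply: not_all_ex_not => hall; apply: hne; by exists k.
have bound : forall t, t <= 2 * m -> exists M, forall k, k < t -> ~ V (k + 2 * m * M).
  elim=> [|t IH] ht; first by exists 0.
  have [M hM] := IH (ltnW ht).
  have [i hi] := hk t ht.
  exists (maxn M i) => k; rewrite ltnS leq_eqVlt => /orP [/eqP -> | hkt].
  + by apply: (up _ i) => //; exact: leq_maxr.
  + by apply: (up _ M) => //; [exact: leq_maxl | exact: hM].
have [M hM] := bound (2 * m) (leqnn _).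
have [n [hn _ hV]] := hinf (M * (2 * m)).
have h2m : 0 < 2 * m by rewrite muln_gt0.
apply: (up _ M (n %/ (2 * m)) _ (hM _ (ltn_pmod n h2m))).
  by rewrite leq_divRL.
by rewrite /V (mulnC (2 * m)) addnC -divn_eq; exact: hV.
Qed.
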